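(* Let $H$ be a graph with $t\geq 1$ vertices and $q$ edges, and assume that $H$ contains a 2-degenerate spanning subgraph $H'$ with $q'$ edges. Let $G$ be a graph with $n\geq 1$ vertices and minimum degree $\delta$, with $2\delta-n\geq q-q'+t-2$. Then $G$ contains a $(\leq 1)$-subdivision of $H$ as a subgraph.
   Context: All graphs are finite and simple. A graph is 2-degenerate if every non-empty subgraph of it has a vertex of degree at most 2. A subgraph $H'$ of $H$ is spanning if $V(H')=V(H)$. A $(\leq 1)$-subdivision of $H$ is a graph obtained from $H$ by subdividing each edge of $H$ at most once (i.e., replacing some edges by paths of length 2 through new vertices). *)

(* Defs.v *)
From mathcomp Require Import all_boot all_order all_algebra.
Set Implicit Arguments. Unset Strict Implicit. Unset Printing Implicit Defensive.

Definition simple_graph (T : finType) (e : rel T) : Prop :=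
  (forall x y, e x y = e y x) /\ (forall x, ~~ e x x).

Definition edge_set (T : finType) (e : rel T) : {set {set T}} :=
  [set [set x; y] | x in T, y in T & e x y].

Definition nedges (T : finType) (e : rel T) : nat := #|edge_set e|.

Definition deg (T : finType) (e : rel T) (x : T) : nat := #|[set y | e x y]|.

(* minimum degree (meaningful when T is nonempty). *)
Definition mindeg (T : finType) (e : rel T) : nat :=
  \big[minn/#|T|]_(x : T) deg e x.

Definition spanning_subgraph (T : finType) (e' e : rel T) : Prop :=
  simple_graph e' /\ (forall x y, e' x y -> e x y).

Definition two_degenerate (T : finType) (e : rel T) : Prop :=
  forall (S : {set T}) (E : rel T),
    S != set0 -> (forall x y, E x y -> e x y) ->
    exists2 x, x \in S & #|[set y in S | E x y]| <= 2.

(* G (on W) contains a (<= 1)-subdivision of H (on V) as a subgraph: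
   branch vertices f injective; each edge uv of H is either an edge f u f v
   of G, or is subdivided by a vertex m u v = Some w of G outside the branch
   vertices, adjacent to f u and f v; distinct edges get distinct
   subdivision vertices. *)
Definition contains_le1_subdivision (V W : finType) (H : rel V) (G : rel W) : Prop :=
  exists (f : V -> W) (m : V -> V -> option W),
    injective f /\
    (forall u v, H u v -> m u v = m v u) /\
    (forall u v, H u v ->
       match m u v with
       | None => G (f u) (f v)
       | Some w => [&& G (f u) w, G w (f v) & w \notin codom f]
       end) /\
    (forall u v u' v' w, H u v -> H u' v' -> m u v = Some w -> m u' v' = Some w ->
       (u = u' /\ v = v') \/ (u = v' /\ v = u')).

(* Main.v *)
Require Import Defs.
From mathcomp Require Import all_boot all_order all_algebra zify.
Import GRing.Theory Num.Theory.

Lemma set2_eqE (T : finType) (u v x y : T) :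
  [set u; v] = [set x; y] -> (u = x /\ v = y) \/ (u = y /\ v = x).
Proof.
move=> E.
have hu : u \in [set x; y] by rewrite -E set21.
have hv : v \in [set x; y] by rewrite -E set22.
have hx : x \in [set u; v] by rewrite E set21.
have hy : y \in [set u; v] by rewrite E set22.
move: hu hv hx hy => /set2P[]-> /set2P[]-> /set2P[]? /set2P[]?; subst; tauto.
Qed.

Arguments set2_eqE {T u v x y}.

Lemma mindeg_le (T : finType) (e : rel T) x : mindeg e <= deg e x.
Proof.
rewrite /mindeg; have : x \in index_enum T by rewrite mem_index_enum.
elim: (index_enum T) => [|y s IH]; first by [].
rewrite inE big_cons => /orP[/eqP->|/IH h]; first exact: geq_minl.
exact: leq_trans (geq_minr _ _) h.
Qed.

Section CN.
Variables (W : finType) (G : rel W) (d : nat).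
Hypothesis Girr : forall x, ~~ G x x.
Hypothesis Gdeg : forall x, d <= deg G x.

Definition CN (X : {set W}) := [set w | [forall a in X, G a w]].

Lemma CN_card k : forall X : {set W}, #|X| = k -> #|W| <= #|CN X| + #|X| * (#|W| - d).
Proof.
elim: k => [|k IH] X hX.
  have -> : X = set0 by apply/eqP; rewrite -cards_eq0 hX.
  rewrite cards0 mul0n addn0.
  have -> : CN set0 = setT by apply/setP=> w; rewrite !inE; apply/forall_inP=> a; rewrite inE.
  by rewrite cardsT.
case: (set_0Vmem X) => [X0|[x xX]]; first by rewrite X0 cards0 in hX.
have hX' : #|X :\ x| = k by move: hX; rewrite (cardsD1 x) xX; case.
have := IH _ hX'.
have E : CN X = CN (X :\ x) :&: [set y | G x y].
  apply/setP=> w; rewrite !inE; apply/forall_inP/andP.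
    move=> H; split; last by apply: H.
    by apply/forall_inP=> a; rewrite !inE => /andP[_ /H].
  case=> /forall_inP H1 H2 a aX; case: (eqVneq a x) => [->//|ax].
  by apply: H1; rewrite !inE ax.
have hd := Gdeg x; rewrite /deg in hd.
have hU := cardsUI (CN (X :\ x)) [set y | G x y].
have hT := max_card (mem (CN (X :\ x) :|: [set y | G x y])).
rewrite E hX hX'.
have hdW : d <= #|W|.
  apply: leq_trans hd _; exact: max_card.
move=> IHk; rewrite mulSn; move: hd hU hT IHk hdW; set a := #|CN (X :\ x)|; set b := #|[set y | G x y]|; set c := #|CN (X :\ x) :&: [set y | G x y]|; set u := #|CN (X :\ x) :|: [set y | G x y]|; set m := k * (#|W| - d); lia.
Qed.

Lemma CN_disj (X Z : {set W}) : X \subset Z -> #|Z :&: CN X| + #|X| <= #|Z|.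
Proof.
move=> sXZ.
have D : (Z :&: CN X) :&: X = set0.
  apply/setP=> w; rewrite !inE; apply/negP => /andP[/andP[_ /forall_inP H] wX].
  by have := H _ wX; rewrite (negbTE (Girr w)).
have := cardsU (Z :&: CN X) X; rewrite D cards0 subn0 => <-.
by apply: subset_leq_card; rewrite subUset subsetIl sXZ.
Qed.

End CN.
Arguments CN {W} G X.
Arguments CN_disj {W G} Girr {X Z}.
Arguments CN_card {W G d} Gdeg {k X}.

Lemma embed (V W : finType) (H' : rel V) (G : rel W) (d : nat) (w0 : W) :
  simple_graph H' -> simple_graph G -> two_degenerate H' ->
  (forall x, d <= deg G x) -> d < #|W| ->
  #|V| <= d + 1 -> #|V| + #|W| <= 2 * d + 2 ->
  forall k (S : {set V}), #|S| = k ->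
  exists f : V -> W, {in S &, injective f} /\
    (forall x y, x \in S -> y \in S -> H' x y -> G (f x) (f y)).
Proof.
move=> [H'sym H'irr] [Gsym Girr] H2 Gdeg dn tle tn.
elim=> [|k IH] S hS.
  have S0 : S = set0 by apply/eqP; rewrite -cards_eq0 hS.
  exists (fun _ => w0); split; first by move=> x y; rewrite S0 inE.
  by move=> x y; rewrite S0 inE.
have S0 : S != set0 by rewrite -card_gt0 hS.
have [x xS hx] := H2 S H' S0 (fun _ _ h => h).
have hS' : #|S :\ x| = k by move: hS; rewrite (cardsD1 x) xS; case.
have [f [finj fe]] := IH _ hS'.
set B := [set y in S :\ x | H' x y].
set A := f @: B.
have hA : #|A| <= 2.
  apply: leq_trans (leq_imset_card _ _) _; apply: leq_trans hx.
  by apply: subset_leq_card; apply/subsetP=> y; rewrite !inE => /andP[/andP[_ ->] ->].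
set Y := f @: (S :\ x).
have sAY : A \subset Y by apply: imsetS; apply/subsetP=> y; rewrite inE => /andP[].
have h1 := CN_disj Girr sAY.
have h2 := CN_card Gdeg (erefl #|A|).
have h3 : #|Y| <= k by rewrite -hS'; apply: leq_imset_card.
have h4 : k + 1 <= #|V| by rewrite addn1 -hS; apply: max_card.
have : #|Y :&: CN G A| < #|CN G A|.
  move: h1 h2 h3 h4; set a := #|A|; set c := #|CN G A|; set e := #|Y :&: CN G A|.
  have : a = 0 \/ a = 1 \/ a = 2 by lia.
  case=> [->|[->|->]]; lia.
move=> hlt.
have [w wC wY] : exists2 w, w \in CN G A & w \notin Y.
  have : 0 < #|CN G A :\: Y| by rewrite cardsD setIC; lia.
  by rewrite card_gt0 => /set0Pn[w]; rewrite inE => /andP[wY wC]; exists w.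
exists (fun y => if y == x then w else f y); split.
  move=> y z yS zS /=.
  case: (eqVneq y x) => [->|yx]; case: (eqVneq z x) => [->|zx] //.
  - by move=> E; case/negP: wY; rewrite E /Y; apply: imset_f; rewrite !inE zx.
  - by move=> E; case/negP: wY; rewrite -E /Y; apply: imset_f; rewrite !inE yx.
  - by apply: finj; rewrite !inE ?yx ?zx.
move=> y z yS zS /=.
have GA : forall u, u \in S -> u != x -> H' x u -> G (f u) w.
  move=> u uS ux hu; move: wC; rewrite inE => /forall_inP; apply; rewrite /A /B; apply: imset_f.
  by rewrite !inE ux uS hu.
case: (eqVneq y x) => [->|yx]; case: (eqVneq z x) => [->|zx].
- by rewrite (negbTE (H'irr x)).
- by move=> h; rewrite Gsym; apply: GA.
- by move=> h; apply: GA => //; rewrite H'sym.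
- by apply: fe; rewrite !inE ?yx ?zx.
Qed.

Lemma subdiv (V W : finType) (G : rel W) (f : V -> W) (d : nat) (w0 : W)
  (Enew : {set {set V}}) :
  (forall x, ~~ G x x) -> (forall x, d <= deg G x) -> d < #|W| ->
  (forall e, e \in Enew -> #|e| <= 2) ->
  #|Enew| + #|V| + #|W| <= 2 * d + 2 ->
  forall k (F : {set {set V}}), F \subset Enew -> #|F| = k ->
  exists g : {set V} -> W,
    (forall e, e \in F -> g e \in CN G (f @: e) /\ g e \notin f @: setT) /\
    {in F &, injective g}.
Proof.
move=> Girr Gdeg dn hE tn.
elim=> [|k IH] F sF hF.
  have F0 : F = set0 by apply/eqP; rewrite -cards_eq0 hF.
  exists (fun _ => w0); split; first by move=> e; rewrite F0 inE.
  by move=> x y; rewrite F0 inE.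
have F0 : F != set0 by rewrite -card_gt0 hF.
have [e eF] := set0Pn _ F0.
have hF' : #|F :\ e| = k by move: hF; rewrite (cardsD1 e) eF; case.
have sF' : F :\ e \subset Enew by apply: subset_trans sF; apply: subsetDl.
have [g [gP ginj]] := IH _ sF' hF'.
set X := f @: e.
set Z := f @: [set: V].
have hA : #|X| <= 2 by apply: leq_trans (leq_imset_card _ _) _; apply: hE; apply: (subsetP sF).
have sXZ : X \subset Z by apply: imsetS; apply: subsetT.
have h1 := CN_disj Girr sXZ.
have h2 := CN_card Gdeg (erefl #|X|).
have hZ : #|Z| <= #|V| by rewrite -cardsT; apply: leq_imset_card.
set Gs := g @: (F :\ e).
have hG : #|Gs| <= k by rewrite -hF'; apply: leq_imset_card.
have hD : k.+1 <= #|Enew| by rewrite -hF; apply: subset_leq_card.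
set Y := Z :|: Gs.
have hY : #|Y :&: CN G X| <= #|Z :&: CN G X| + #|Gs|.
  have := cardsUI (Z :&: CN G X) Gs.
  have : #|Y :&: CN G X| <= #|(Z :&: CN G X) :|: Gs|.
    apply: subset_leq_card; apply/subsetP=> w; rewrite !inE.
    by case/andP=> /orP[->->|->]; rewrite ?orbT.
  lia.
have : #|Y :&: CN G X| < #|CN G X|.
  move: h1 h2 hY hZ hG hD; set a := #|X|; set c := #|CN G X|.
  have : a = 0 \/ a = 1 \/ a = 2 by lia.
  case=> [->|[->|->]]; lia.
move=> hlt.
have [w wC wY] : exists2 w, w \in CN G X & w \notin Y.
  have : 0 < #|CN G X :\: Y| by rewrite cardsD setIC; lia.
  by rewrite card_gt0 => /set0Pn[w]; rewrite inE => /andP[wY wC]; exists w.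
exists (fun e' => if e' == e then w else g e'); split.
  move=> e' e'F; case: (eqVneq e' e) => [->|e'e]; first by split=> //; apply: contra wY; rewrite inE => ->.
  by apply: gP; rewrite !inE e'e.
move=> y z yS zS /=.
case: (eqVneq y e) => [->|yx]; case: (eqVneq z e) => [->|zx] //.
- by move=> E; case/negP: wY; rewrite E /Y /Gs inE; apply/orP; right; apply: imset_f; rewrite !inE zx.
- by move=> E; case/negP: wY; rewrite -E /Y /Gs inE; apply/orP; right; apply: imset_f; rewrite !inE yx.
- by apply: ginj; rewrite !inE ?yx ?zx.
Qed.

Lemma mem_edge (T : finType) (e : rel T) (E : {set T}) :
  E \in edge_set e -> exists x y, E = [set x; y] /\ e x y.
Proof. by case/imset2P=> x y _; rewrite inE => /andP[_ h] ->; exists x, y. Qed.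

Lemma edge_mem (T : finType) (e : rel T) x y : e x y -> [set x; y] \in edge_set e.
Proof. by move=> h; apply/imset2P; exists x y; rewrite ?inE ?h. Qed.

Theorem lemma13 (V W : finType) (H H' : rel V) (G : rel W) :
  simple_graph H -> simple_graph G ->
  (1 <= #|V|)%N -> (1 <= #|W|)%N ->
  spanning_subgraph H' H -> two_degenerate H' ->
  ((nedges H)%:Z - (nedges H')%:Z + (#|V|)%:Z - 2 <=
     2 * (mindeg G)%:Z - (#|W|)%:Z)%R ->
  contains_le1_subdivision H G.
Proof.
move=> [Hsym Hirr] [Gsym Girr] hV hW [[H'sym H'irr] H'H] H2 hineq.
have [w0 _] : exists w0 : W, true.
  by move: hW; rewrite -cardsT card_gt0 => /set0Pn[w _]; exists w.
set d := mindeg G.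
have Gdeg : forall x, d <= deg G x by move=> x; apply: mindeg_le.
have dn : d < #|W|.
  apply: leq_ltn_trans (Gdeg w0) _.
  have := cardsD1 w0 [set: W]; rewrite in_setT cardsT => ->.
  rewrite add1n ltnS /deg; apply: subset_leq_card; apply/subsetP=> y.
  by rewrite !inE; case: (eqVneq y w0) => [->|]; rewrite ?(negbTE (Girr w0)).
set Enew := edge_set H :\: edge_set H'.
have sE : edge_set H' \subset edge_set H.
  apply/subsetP=> E /mem_edge[x [y [-> h]]]; exact: edge_mem (H'H _ _ h).
have cE : #|Enew| = nedges H - nedges H' by rewrite cardsDS.
have le' : nedges H' <= nedges H by apply: subset_leq_card.
have tn : #|Enew| + #|V| + #|W| <= 2 * d + 2.
  rewrite cE; move: hineq le' dn; rewrite /d; lia.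
have [f [finj fe]] := @embed V W H' G d w0 (conj H'sym H'irr) (conj Gsym Girr) H2
   Gdeg dn ltac:(lia) ltac:(lia) _ [set: V] (erefl _).
have hE : forall e, e \in Enew -> #|e| <= 2.
  move=> e; rewrite inE => /andP[_ /mem_edge[x [y [-> _]]]].
  by rewrite cards2; case: (x != y).
have [g [gP ginj]] := @subdiv V W G f d w0 Enew Girr Gdeg dn hE tn _ Enew (subxx _) (erefl _).
have inNew : forall u v, H u v -> ~~ H' u v -> [set u; v] \in Enew.
  move=> u v huv hn; rewrite inE (@edge_mem _ _ u v huv) andbT.
  apply/negP=> /mem_edge[x [y [E hxy]]]; case/negP: hn.
  by case: (set2_eqE E) => [[-> ->]|[-> ->]] //; rewrite H'sym.
exists f, (fun u v => if H' u v then None else Some (g [set u; v])).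
split; first by move=> x y; apply: finj; rewrite inE.
split; first by move=> u v _; rewrite H'sym setUC.
split.
  move=> u v huv; case: ifP => hn; first by apply: fe; rewrite ?inE.
  have [gC gZ] := gP _ (inNew _ _ huv (negbT hn)).
  move: gC; rewrite inE => /forall_inP gC.
  rewrite gC ?imset_f ?set21 //=.
  rewrite Gsym gC ?imset_f ?set22 //=.
  by apply: contra gZ => /codomP[x ->]; apply: imset_f; rewrite inE.
move=> u v u' v' w huv hu'v'.
case: ifP => h1 //; case: ifP => h2 // [<-] E.
have := ginj _ _ (inNew _ _ huv (negbT h1)) (inNew _ _ hu'v' (negbT h2)).
case: E => ->; move/(_ erefl)/esym => E.
by case: (set2_eqE E) => [[-> ->]|[-> ->]]; tauto.
Qed.
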